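(* A finite noncyclic group $G$ has the property that the poset $C(G)$ of its cyclic subgroups possesses exactly one breaking point if and only if $G$ is a generalized quaternion $2$-group $Q_{2^n}$ for some $n\geq 3$.
   Context: For a finite group $G$, $C(G)$ denotes the set of cyclic subgroups of $G$, partially ordered by inclusion. A breaking point of $C(G)$ is a subgroup $H\in C(G)$ with $H\neq 1$ and $H\neq G$ such that for every $X\in C(G)$ we have $X\leq H$ or $H\leq X$. For $n\geq 3$, the generalized quaternion $2$-group is $Q_{2^n}=\langle a,b \mid a^{2^{n-2}}=b^2,\ a^{2^{n-1}}=1,\ b^{-1}ab=a^{-1}\rangle$, of order $2^n$. *)

(* Defs.v *)
From HB Require Import structures.
From mathcomp Require Import all_boot all_fingroup all_solvable.
Set Implicit Arguments. Unset Strict Implicit. Unset Printing Implicit Defensive.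
Local Open Scope group_scope.

Definition cyclic_subgroups (gT : finGroupType) (G : {set gT}) : {set {set gT}} :=
  [set H : {set gT} | (H \subset G) && cyclic H].

Definition breaking_point (gT : finGroupType) (G H : {set gT}) : bool :=
  [&& H \in cyclic_subgroups G, H != 1, H != G &
      [forall X in cyclic_subgroups G, (X \subset H) || (H \subset X)]].

Definition breaking_points (gT : finGroupType) (G : {set gT}) : {set {set gT}} :=
  [set H : {set gT} | breaking_point G H].

(* Main.v *)
Require Import Defs.
From HB Require Import structures.
From mathcomp Require Import all_boot all_fingroup all_solvable.

Set Implicit Arguments. Unset Strict Implicit. Unset Printing Implicit Defensive.

Section Aux.
Local Open Scope group_scope.
Variable gT : finGroupType.
Implicit Types G H : {group gT}.

Lemma bp_mem G (h g : gT) : breaking_point G <[h]> -> g \in G ->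
  (g \in <[h]>) || (<[h]> \subset <[g]>).
Proof.
case/and4P => _ _ _ /forall_inP cmp Gg.
have := cmp <[g]>; rewrite inE cycle_subG Gg cycle_cyclic => /(_ isT).
by rewrite cycle_subG.
Qed.

Lemma bp_prime G (h g : gT) : breaking_point G <[h]> -> g \in G ->
  prime #[g] -> g \in <[h]>.
Proof.
move=> bp Gg pg; case/orP: (bp_mem bp Gg) => // sHg.
have ntH : #|<[h]>| != 1%N by case/and4P: bp => _; rewrite -trivg_card1.
have oH := elimT (prime_nt_dvdP pg ntH) (cardSg sHg).
have -> : <[h]> = <[g]>.
  by apply/eqP; rewrite eqEcard sHg /= oH.
exact: cycle_id.
Qed.

Lemma bp_pgroup G (h : gT) : breaking_point G <[h]> ->
  (pdiv #|<[h]>|).-group <[h]>.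
Proof.
move=> bp; have bp' := bp; case/and4P: bp' => /[!inE] /andP[sHG _] ntH neHG _.
have [g Gg Hg] : exists2 g, g \in G & g \notin <[h]>.
  apply/subsetPn; apply: contra neHG => sGH; by rewrite eqEsubset sHG sGH.
set p := pdiv #|<[h]>|.
have p_pr : prime p by apply: pdiv_prime; rewrite ltnNge -trivg_card_le1.
have sgG : <[g]> \subset G by rewrite cycle_subG.
have Gp : forall pi, g.`_pi \in G := fun pi => subsetP sgG _ (cycle_constt pi g).
have [Hgp | nHgp] := boolP (g.`_p \in <[h]>); last first.
  have := bp_mem bp (Gp p); rewrite (negPf nHgp) /= => sub.
  exact: pgroupS sub (p_elt_constt p g).
have nHgp' : g.`_p^' \notin <[h]>.
  by apply: contra Hg => Hgp'; rewrite -(consttC p g) groupM.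
have := bp_mem bp (Gp p^'); rewrite (negPf nHgp') /= => sub.
have := pgroupS sub (p_elt_constt p^' g).
move/pgroupP/(_ p p_pr (pdiv_dvd _)).
by rewrite !inE eqxx.
Qed.


Lemma fwd G : ~~ cyclic G -> #|breaking_points G| = 1%N ->
  exists2 n, 3 <= n & G \isog 'Q_(2 ^ n)%N.
Proof.
move=> ncG cardB.
have : (0 < #|breaking_points G|)%N by rewrite cardB.
case/card_gt0P => H; rewrite inE => bp.
have /cyclicP [h defH] : cyclic H by case/and4P: bp => /[!inE] /andP[].
rewrite {H}defH in bp.
have pH := bp_pgroup bp; set p := pdiv _ in pH.
have ntH : <[h]> != 1 by case/and4P: bp.
have sHG : <[h]> \subset G by case/and4P: bp => /[!inE] /andP[].
have p_pr : prime p by case: (pgroup_pdiv pH ntH).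
have pG : p.-group G.
  apply/pgroupP => q q_pr qG; have [x Gx ox] := Cauchy q_pr qG.
  have Hx : x \in <[h]> by apply: bp_prime bp Gx _; rewrite ox.
  have : (q %| #|<[h]>|)%N by rewrite -ox order_dvdG.
  exact: (pgroupP pH) q q_pr.
have ntG : G :!=: 1.
  by apply: contra ncG => /eqP ->; rewrite cyclic1.
have sOH : 'Ohm_1(G) \subset <[h]>.
  rewrite Ohm1Eprime gen_subG; apply/subsetP => x /[!inE] /andP[Gx px].
  exact: bp_prime bp Gx px.
have oO : #|'Ohm_1(G)| = p.
  have E : 'Ohm_1(G) :==: 'Ohm_1(<[h]>).
    rewrite eqEsubset (OhmS 1 sHG) andbT.
    by rewrite -{1}Ohm_id OhmS.
  by rewrite (eqP E) (Ohm1_cyclic_pgroup_prime (cycle_cyclic h) pH ntH).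
move/(prime_Ohm1P pG ntG): oO => /orP[cG | /andP[/eqP p2 /eqP/quaternion_classP]].
  by rewrite cG in ncG.
by [].
Qed.


Lemma bwd G n : 3 <= n -> G \isog 'Q_(2 ^ n)%N -> #|breaking_points G| = 1%N.
Proof.
move=> n3 isoG.
have n_gt2 : 2 < n by [].
have [[x y] genG [oy _ _]] := generators_quaternion n_gt2 isoG.
have [pG _ _ _ _] := extremal_generators_facts (isT : prime 2) genG.
have [[_ tG _] _ _ _ _] := quaternion_structure n_gt2 genG isoG.
have [oG Gx ox X'y] := genG.
have e8 : (8 <= 2 ^ n)%N by rewrite -[8%N]/(2 ^ 3)%N leq_exp2l.
have ntG : G :!=: 1.
  by rewrite trivg_card1 oG; apply: contraTneq e8 => ->.
have cq : extremal_class G = Quaternion by apply/quaternion_classP; exists n.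
have oZ : #|'Ohm_1(G)| = 2%N.
  by apply/(prime_Ohm1P pG ntG); rewrite cq eqxx orbT.
have keyZ : forall K : {group gT}, K \subset G -> cyclic K -> K :!=: 1 ->
    'Ohm_1(G) \subset K.
  move=> K sKG cK ntK.
  have oK := Ohm1_cyclic_pgroup_prime cK (pgroupS sKG pG) ntK.
  have E : 'Ohm_1(K) :==: 'Ohm_1(G) by rewrite eqEcard OhmS //= oK oZ.
  by rewrite -(eqP E) Ohm_sub.
suff -> : breaking_points G = [set 'Ohm_1(G)] by rewrite cards1.
apply/setP => H; rewrite !inE; apply/idP/eqP => [bp | ->].
  have /cyclicP [h defH] : cyclic H by case/and4P: bp => /[!inE] /andP[].
  rewrite {H}defH in bp *.
  have ntH : <[h]> != 1 by case/and4P: bp.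
  have sHG : <[h]> \subset G by case/and4P: bp => /[!inE] /andP[].
  have sZH := keyZ _ sHG (cycle_cyclic h) ntH.
  apply/eqP; rewrite eq_sym eqEcard sZH oZ leqNgt; apply/negP => H2.
  have key : forall t, t \in G :\: <[x]> -> <[t]> \subset <[h]>.
    move=> t Xt; have ot := tG t Xt; have Gt : t \in G by case/setDP: Xt.
    case/orP: (bp_mem bp Gt) => [|sHt]; first by rewrite cycle_subG.
    have d4 : (#|<[h]>| %| 4)%N by rewrite -ot orderE cardSg.
    have oH : #|<[h]>| = 4%N.
      move: d4 H2 (dvdn_leq (isT : 0 < 4)%N d4).
      by case: #|<[h]>| => [|[|[|[|[|k]]]]].
    have -> : <[h]> = <[t]>.
      by apply/eqP; rewrite eqEcard sHt /= oH -orderE ot.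
    exact: subxx.
  have Xxy : x * y \in G :\: <[x]>.
    case/setDP: X'y => Gy nXy.
    by rewrite inE (groupM Gx Gy) andbT groupMl ?cycle_id.
  have E := eq_subG_cyclic (cycle_cyclic h) (key y X'y) (key _ Xxy).
  rewrite -!orderE (tG _ X'y) (tG _ Xxy) eqxx in E.
  have xY : x \in <[y]>.
    have : x * y \in <[y]> by rewrite (eqP E) cycle_id.
    by rewrite groupMr ?cycle_id.
  have sXY : <[x]> \subset <[y]> by rewrite cycle_subG.
  have l4 : (4 <= #[x])%N.
    by rewrite ox -[4%N]/(2 ^ 2)%N leq_exp2l // -ltnS (ltn_predK n_gt2).
  have EX : <[x]> :==: <[y]>.
    by rewrite eqEcard sXY -!orderE oy andTb.
  by case/setDP: X'y; rewrite (eqP EX) cycle_id.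
rewrite /breaking_point inE Ohm_sub prime_cyclic ?oZ //=.
rewrite trivg_card1 oZ /=.
have nOG : 'Ohm_1(G) :!=: G.
  by rewrite eqEcard Ohm_sub /= oG oZ -ltnNge (leq_trans _ e8).
rewrite nOG /=.
apply/forall_inP => X; rewrite inE => /andP[sXG /cyclicP[g EX]]; subst X.
have [-> | ntg] := eqVneq (<[g]> : {set gT}) 1; first by rewrite sub1G.
by rewrite (keyZ <[g]>%G sXG (cycle_cyclic g) ntg) orbT.
Qed.

End Aux.

Theorem corollary2p2 (gT : finGroupType) (G : {group gT}) :
  ~~ cyclic G ->
  (#|breaking_points G| = 1 <-> exists2 n, 3 <= n & G \isog 'Q_(2 ^ n)).
Proof.
move=> ncG; split; first exact: fwd.
by case=> n n3 isoG; apply: (bwd n3 isoG).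
Qed.
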